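(* Let $x\in\mathbb{R}^n$ and consider the linear model $\Phi(x;w)=\Phi(x;(A,b))=Ax+b$ with parameter $w=(A,b)$, $A\in\mathbb{R}^{m\times n}$, $b\in\mathbb{R}^m$, and the divergence $div(u,v)=\|u-v\|_2^2$. Let $K\ge1$, let $P_1,\dots,P_K$ be probability measures on $\mathbb{R}^n$ with finite second moments, $P_k$ supported on $\mathcal{D}_k$, and let $q_1,\dots,q_K\ge0$ with $\sum_kq_k=1$. Let $J(x)$ denote the Jacobian of $w\mapsto Ax+b$ (which depends only on $x$) and set $H_k=\int_{\mathcal{D}_k}J(x)^\top(2I_m)J(x)\,P_k(dx)$. Suppose the datasets are homogeneous, i.e. $H_1=\dots=H_K$. Then for any local parameters $w_k=(A_k,b_k)$, $k=1,\dots,K$, the weighted average $\hat w=\sum_{k=1}^Kq_kw_k$ is a minimizer of $$w\mapsto\sum_{k=1}^K q_k\int_{\mathcal{D}_k}div(\Phi(x;w_k),\Phi(x;w))\,P_k(dx).$$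
   Context: Here $w_k$ are the parameters of local models trained on client datasets $\mathcal{D}_k$ with distributions $P_k$, and the minimized objective is the distillation objective whose minimizer is the global model. ''Homogeneous'' means the matrices $H_k$ (the Hessians of the objective's $k$-th term, $\int J^\top \partial_u^2 div\, J\,dP_k$) coincide for all clients. *)

(* Defs.v *)
From HB Require Import structures.
From mathcomp Require Import all_boot all_order all_algebra.
From mathcomp Require Import all_classical all_reals all_analysis.
Set Implicit Arguments. Unset Strict Implicit. Unset Printing Implicit Defensive.
Import Order.TTheory GRing.Theory Num.Theory.
Import numFieldNormedType.Exports.
Local Open Scope classical_set_scope.
Local Open Scope ring_scope.

Definition Rn (R : realType) (n : nat) :=
  g_sigma_algebraType (@open 'cV[R]_n).

(* Parameter vector w = (A, b), vectorized as a column of size m*n + m: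
   the top block is mxvec A (transposed), the bottom block is b. *)
Definition param (R : realType) (m n : nat) := 'cV[R]_(m * n + m).

Definition wA (R : realType) (m n : nat) (w : param R m n) : 'M[R]_(m, n) :=
  vec_mx (usubmx w)^T.
Definition wb (R : realType) (m n : nat) (w : param R m n) : 'cV[R]_m :=
  dsubmx w.
Definition param_of (R : realType) (m n : nat) (A : 'M[R]_(m, n)) (b : 'cV[R]_m)
  : param R m n := col_mx (mxvec A)^T b.

Definition Phi (R : realType) (m n : nat) (x : 'cV[R]_n) (w : param R m n)
  : 'cV[R]_m := wA w *m x + wb w.

Definition div (R : realType) (m : nat) (u v : 'cV[R]_m) : R :=
  \sum_(i < m) (u i 0 - v i 0) ^+ 2.

(* Jacobian of the (linear) map w |-> Phi(x; w): column k is the image of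
   the k-th basis vector of parameter space. *)
Definition Jac (R : realType) (m n : nat) (x : 'cV[R]_n) : 'M[R]_(m, m * n + m) :=
  \matrix_(i < m, k < m * n + m) Phi x (delta_mx k 0 : param R m n) i 0.

Definition Hmat (R : realType) (m n : nat) (P : probability (Rn R n) R)
  (D : set (Rn R n)) : 'M[R]_(m * n + m) :=
  \matrix_(i, j) Rintegral P D
     (fun x : Rn R n => ((Jac m x)^T *m (2%:M : 'M[R]_m) *m Jac m x) i j).

Definition objective (R : realType) (m n K : nat)
  (P : 'I_K -> probability (Rn R n) R) (D : 'I_K -> set (Rn R n))
  (q : 'I_K -> R) (wk : 'I_K -> param R m n) (w : param R m n) : \bar R :=
  (\sum_(k < K) (q k)%:E *
     \int[P k]_(x in D k) (div (Phi (x : 'cV[R]_n) (wk k)) (Phi (x : 'cV[R]_n) w))%:E)%E.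

(* Main.v *)
Require Import Defs.
From HB Require Import structures.
From mathcomp Require Import all_boot all_order all_algebra.
From mathcomp Require Import all_classical all_reals all_analysis.
From mathcomp Require Import measurable_realfun ring lra.
Import Order.TTheory GRing.Theory Num.Theory.
Import numFieldNormedType.Exports.
Local Open Scope classical_set_scope.
Local Open Scope ring_scope.

Section LA.
Variables (R : realType) (m n : nat).

Lemma PhiD (x : 'cV[R]_n) (u v : param R m n) : Phi x (u + v) = Phi x u + Phi x v.
Proof.
rewrite /Phi /wA /wb.
rewrite (raddfD (@dsubmx R (m * n) m 1)).
rewrite (raddfD (@usubmx R (m * n) m 1)).
rewrite (raddfD (@trmx R _ _)).
rewrite (raddfD (@vec_mx R m n)).
by rewrite mulmxDl addrACA.
Qed.

Lemma PhiZ (x : 'cV[R]_n) a (u : param R m n) : Phi x (a *: u) = a *: Phi x u.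
Proof.
rewrite /Phi /wA /wb.
rewrite (linearZ_LR (@dsubmx R (m * n) m 1)).
rewrite (linearZ_LR (@usubmx R (m * n) m 1)).
rewrite (linearZ_LR (@trmx R _ _)).
rewrite (linearZ_LR (@vec_mx R m n)).
by rewrite /= scalerDr -scalemxAl.
Qed.

Lemma Phi0 (x : 'cV[R]_n) : Phi x (0 : param R m n) = 0.
Proof. by rewrite -(scale0r (0 : param R m n)) PhiZ scale0r. Qed.

Lemma PhiB (x : 'cV[R]_n) (u v : param R m n) : Phi x (u - v) = Phi x u - Phi x v.
Proof. by rewrite PhiD -scaleN1r PhiZ scaleN1r. Qed.

Lemma Phi_sum (x : 'cV[R]_n) I (s : seq I) (F : I -> param R m n) :
  Phi x (\sum_(k <- s) F k) = \sum_(k <- s) Phi x (F k).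
Proof.
elim: s => [|a s IH]; first by rewrite !big_nil Phi0.
by rewrite !big_cons PhiD IH.
Qed.

Lemma Jac_mul (x : 'cV[R]_n) (w : param R m n) : Jac m x *m w = Phi x w.
Proof.
apply/matrixP => i j; rewrite (ord1 j) mxE.
rewrite {2}(matrix_sum_delta w) Phi_sum.
rewrite summxE; apply: eq_bigr => k _.
by rewrite big_ord1 PhiZ !mxE mulrC; congr (_ * _).
Qed.

Lemma quad_expand N (a : 'cV[R]_N) (M : 'M[R]_N) :
  (a^T *m M *m a) 0 0 = \sum_i \sum_j a i 0 * M i j * a j 0.
Proof.
rewrite mxE exchange_big /=; apply: eq_bigr => j _.
rewrite mxE mulr_suml; apply: eq_bigr => i _.
by rewrite !mxE.
Qed.

Lemma quad2 (y : 'cV[R]_m) : (y^T *m (2%:M : 'M[R]_m) *m y) 0 0 = 2 * \sum_r (y r 0) ^+ 2.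
Proof.
rewrite mul_mx_scalar mxE mulr_sumr.
by apply: eq_bigr => r _; rewrite !mxE expr2 mulrA.
Qed.

Lemma quadJ (x : 'cV[R]_n) (a : param R m n) :
  (a^T *m ((Jac m x)^T *m (2%:M : 'M[R]_m) *m Jac m x) *m a) 0 0 =
  2 * \sum_r ((Phi x a) r 0) ^+ 2.
Proof.
by rewrite !mulmxA -trmx_mul -!mulmxA Jac_mul -quad2 !mulmxA.
Qed.

End LA.
Section G.
Variables (R : realType) (n : nat).
Local Notation T := (Rn R n).

Definition Sq (x : T) : R := \sum_(i < n) ((x : 'cV[R]_n) i 0) ^+ 2.

Lemma Sq_ge0 x : 0 <= Sq x.
Proof. by apply: sumr_ge0 => i _; exact: sqr_ge0. Qed.

Definition Good (f : T -> R) := measurable_fun setT f /\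
  exists C, forall x, f x ^+ 2 <= C * (1 + Sq x).

Lemma good_coord (i : 'I_n) : Good (fun x : T => (x : 'cV[R]_n) i 0).
Proof.
split.
  apply: (measurability _ (RGenOpens.measurableE R)).
  move=> _ [_ [a [b ->] <-]]; apply: sub_sigma_algebra.
  rewrite setTI.
  have := @coord_continuous R n 1 i 0.
  by move/continuousP => /(_ _ (@interval_open R (BRight a) (BLeft b) isT isT)).
exists 1 => x; rewrite mul1r /Sq (bigD1 i) //=.
have := Sq_ge0 x; rewrite /Sq (bigD1 i) //=.
have : 0 <= \sum_(j < n | j != i) ((x : 'cV[R]_n) j 0) ^+ 2.
  by apply: sumr_ge0 => j _; exact: sqr_ge0.
lra.
Qed.

Lemma good_cst c : Good (fun _ => c).
Proof.
split; first exact: measurable_cst.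
exists (c ^+ 2) => x; have := Sq_ge0 x; have := sqr_ge0 c; nra.
Qed.

Lemma good_scale c f : Good f -> Good (fun x => c * f x).
Proof.
move=> [mf [C hC]]; split.
  by apply: measurable_funM => //; exact: measurable_cst.
exists (c ^+ 2 * C) => x; rewrite exprMn -mulrA.
by apply: ler_wpM2l; [exact: sqr_ge0 | exact: hC].
Qed.

Lemma good_add f g : Good f -> Good g -> Good (fun x => f x + g x).
Proof.
move=> [mf [C1 h1]] [mg [C2 h2]]; split; first exact: measurable_funD.
exists (2 * C1 + 2 * C2) => x; have := h1 x; have := h2 x.
have := sqr_ge0 (f x - g x); nra.
Qed.

Lemma good_sum N (F : 'I_N -> T -> R) : (forall j, Good (F j)) ->
  Good (fun x => \sum_(j < N) F j x).
Proof.
elim: N F => [|N IH] F hF.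
  have -> : (fun x => \sum_(j < 0) F j x) = (fun _ => 0).
    by apply: funext => x; rewrite big_ord0.
  exact: good_cst.
have -> : (fun x => \sum_(j < N.+1) F j x) =
   (fun x => \sum_(j < N) F (widen_ord (leqnSn N) j) x + F ord_max x).
  by apply: funext => x; rewrite big_ord_recr.
apply: good_add => //; exact: (IH (fun j => F (widen_ord (leqnSn N) j))).
Qed.

Lemma good_mul_int (P : probability T R) (D : set T) f g :
  measurable D ->
  P.-integrable setT (fun x => (Sq x)%:E) ->
  Good f -> Good g -> P.-integrable D (EFin \o (fun x => f x * g x)).
Proof.
move=> mD hS [mf [C1 h1]] [mg [C2 h2]].
have hS' : P.-integrable D (fun x => (Sq x)%:E) by apply: integrableS hS.
have i1 : P.-integrable D (fun x => ((C1 + C2) * (1 + Sq x))%:E).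
  have i0 : P.-integrable D (fun x => (1%:E + (Sq x)%:E)%E).
    exact: (integrableD mD (finite_measure_integrable_cst P 1 mD) hS').
  apply: (@eq_integrable _ _ _ P D mD (fun x => ((C1 + C2)%:E * (1%:E + (Sq x)%:E))%E)) => //.
    exact: integrableZl.
apply: (le_integrable mD _ _ i1).
  apply/measurable_EFinP; apply: measurable_funS (measurable_funM mf mg) => //.
move=> x _ /=; rewrite !lee_fin.
apply: le_trans (ler_norm _).
have := h1 x; have := h2 x; rewrite ler_norml => a b; apply/andP; split.
  have := sqr_ge0 (f x + g x); nra.
have := sqr_ge0 (f x - g x); nra.
Qed.


Lemma good_Phi m (a : param R m n) r : Good (fun x : T => (Phi (x : 'cV[R]_n) a) r 0).
Proof.
have -> : (fun x : T => (Phi (x : 'cV[R]_n) a) r 0) =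
  (fun x : T => \sum_(l < n) (wA a) r l * (x : 'cV[R]_n) l 0 + wb a r 0).
  by apply: funext => x; rewrite /Phi !mxE.
apply: good_add; last exact: good_cst.
apply: good_sum => l; apply: good_scale; exact: good_coord.
Qed.

Lemma Rint_sum (P : probability T R) (D : set T) (mD : measurable D) N
  (F : 'I_N -> T -> R) :
  (forall j, P.-integrable D (EFin \o F j)) ->
  P.-integrable D (EFin \o (fun x => \sum_(j < N) F j x)) /\
  Rintegral P D (fun x => \sum_(j < N) F j x) = \sum_(j < N) Rintegral P D (F j).
Proof.
elim: N F => [|N IH] F hF.
  have -> : (fun x => \sum_(j < 0) F j x) = (fun _ => 0).
    by apply: funext => x; rewrite big_ord0.
  split; first exact: finite_measure_integrable_cst.
  by rewrite big_ord0 Rintegral_cst // mul0r.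
have -> : (fun x => \sum_(j < N.+1) F j x) =
   (fun x => \sum_(j < N) F (widen_ord (leqnSn N) j) x + F ord_max x).
  by apply: funext => x; rewrite big_ord_recr.
have [i1 e1] := IH (fun j => F (widen_ord (leqnSn N) j)) (fun j => hF _).
split.
  apply: (@eq_integrable _ _ _ P D mD
     (fun x => (EFin (\sum_(j < N) F (widen_ord (leqnSn N) j) x)%R + EFin (F ord_max x))%E)).
    by move=> x _ /=; rewrite EFinD.
  exact: (integrableD mD i1 (hF ord_max)).
by rewrite RintegralD // e1 big_ord_recr.
Qed.

Lemma quad_int (P : probability T R) (D : set T) (mD : measurable D) N
  (G : T -> 'M[R]_N) :
  (forall i j, P.-integrable D (EFin \o (fun x => G x i j))) ->
  forall a : 'cV[R]_N,
  P.-integrable D (EFin \o (fun x => (a^T *m G x *m a) 0 0)) /\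
  (a^T *m (\matrix_(i, j) Rintegral P D (fun x => G x i j)) *m a) 0 0 =
     Rintegral P D (fun x => (a^T *m G x *m a) 0 0).
Proof.
move=> hG a.
have -> : (fun x => (a^T *m G x *m a) 0 0) =
   (fun x => \sum_i \sum_j (a i 0 * a j 0) * G x i j).
  apply: funext => x; rewrite quad_expand; apply: eq_bigr => i _.
  by apply: eq_bigr => j _; rewrite mulrAC mulrC.
have hij : forall i j, P.-integrable D (EFin \o (fun x => (a i 0 * a j 0) * G x i j)).
  move=> i j; apply: (@eq_integrable _ _ _ P D mD
     (fun x => ((a i 0 * a j 0)%:E * (EFin \o (fun x => G x i j)) x)%E)).
    by move=> x _ /=; rewrite EFinM.
  exact: integrableZl.
have hi : forall i, P.-integrable D (EFin \o (fun x => \sum_j (a i 0 * a j 0) * G x i j)) /\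
   Rintegral P D (fun x => \sum_j (a i 0 * a j 0) * G x i j) =
   \sum_j Rintegral P D (fun x => (a i 0 * a j 0) * G x i j).
  by move=> i; apply: Rint_sum.
have [i1 e1] := @Rint_sum P D mD _ _ (fun i => (hi i).1).
split => //.
rewrite e1 quad_expand; apply: eq_bigr => i _.
rewrite (hi i).2; apply: eq_bigr => j _.
rewrite RintegralZl // mxE; lra.
Qed.

Lemma keyK m (P : probability T R) (D : set T) (mD : measurable D)
  (hS : P.-integrable setT (fun x => (Sq x)%:E)) (a : param R m n) :
  P.-integrable D (EFin \o (fun x : T => \sum_r ((Phi (x : 'cV[R]_n) a) r 0) ^+ 2)) /\
  (a^T *m Hmat m P D *m a) 0 0 =
    2 * Rintegral P D (fun x : T => \sum_r ((Phi (x : 'cV[R]_n) a) r 0) ^+ 2).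
Proof.
have hsq : P.-integrable D (EFin \o (fun x : T => \sum_r ((Phi (x : 'cV[R]_n) a) r 0) ^+ 2)).
  have := @Rint_sum P D mD m (fun r x => (Phi (x : 'cV[R]_n) a) r 0 * (Phi (x : 'cV[R]_n) a) r 0).
  case.
    by move=> r; apply: good_mul_int => //; exact: good_Phi.
  move=> h _; apply: (@eq_integrable _ _ _ P D mD _ _ _ h).
  by move=> x _ /=; congr EFin; apply: eq_bigr => r _; rewrite expr2.
split => //.
have hG : forall i j, P.-integrable D (EFin \o (fun x : T =>
   ((Jac m (x : 'cV[R]_n))^T *m (2%:M : 'M[R]_m) *m Jac m (x : 'cV[R]_n)) i j)).
  move=> i j.
  have := @Rint_sum P D mD m (fun r (x : T) =>
     (2 * (Phi (x : 'cV[R]_n) (delta_mx i 0 : param R m n)) r 0) *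
     (Phi (x : 'cV[R]_n) (delta_mx j 0 : param R m n)) r 0).
  case.
    move=> r; apply: good_mul_int => //.
      by apply: good_scale; exact: good_Phi.
    exact: good_Phi.
  move=> h _; apply: (@eq_integrable _ _ _ P D mD _ _ _ h).
  move=> x _ /=; congr EFin; rewrite mul_mx_scalar -scalemxAl mxE [in RHS]mxE mulr_sumr.
  apply: eq_bigr => r _; rewrite !mxE.
  by rewrite mulrA.
have [_ e] := @quad_int P D mD _ _ hG a.
rewrite /Hmat e -RintegralZl //.
by apply: eq_Rintegral => x _; rewrite quadJ.
Qed.

End G.


Lemma Bsuml (R : realType) N K (H : 'M[R]_N) (c : 'I_K -> R) (a : 'I_K -> 'cV[R]_N) (d : 'cV[R]_N) :
  \sum_k c k * ((a k)^T *m H *m d) 0 0 = ((\sum_k c k *: a k)^T *m H *m d) 0 0.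
Proof.
have -> : (\sum_k c k *: a k)^T = \sum_k c k *: (a k)^T.
  by apply/matrixP => i j; rewrite !mxE !summxE; apply: eq_bigr => k _; rewrite !mxE.
rewrite !mulmx_suml summxE; apply: eq_bigr => k _.
by rewrite -scalemxAl -(scalemxAl (c k) ((a k)^T *m H) d) [RHS]mxE.
Qed.

Lemma Bsumr (R : realType) N K (H : 'M[R]_N) (c : 'I_K -> R) (a : 'I_K -> 'cV[R]_N) (d : 'cV[R]_N) :
  \sum_k c k * (d^T *m H *m a k) 0 0 = (d^T *m H *m \sum_k c k *: a k) 0 0.
Proof.
rewrite mulmx_sumr summxE; apply: eq_bigr => k _.
by rewrite -scalemxAr [RHS]mxE.
Qed.

Lemma Bexp (R : realType) N (H : 'M[R]_N) (a d : 'cV[R]_N) :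
  ((a + d)^T *m H *m (a + d)) 0 0 =
  (a^T *m H *m a) 0 0 + (a^T *m H *m d) 0 0 + (d^T *m H *m a) 0 0 + (d^T *m H *m d) 0 0.
Proof.
have -> : (a + d)^T = a^T + d^T by apply/matrixP => i j; rewrite !mxE.
rewrite !mulmxDl !mulmxDr !mxE; lra.
Qed.

Theorem corollary1 (R : realType) (m n K : nat) (HK : (0 < K)%N)
  (P : 'I_K -> probability (Rn R n) R) (D : 'I_K -> set (Rn R n))
  (q : 'I_K -> R)
  (HD : forall k, measurable (D k))
  (Hsupp : forall k, P k (D k) = 1%E)
  (Hmom2 : forall k, (P k).-integrable setT
             (fun x : Rn R n => (\sum_(i < n) ((x : 'cV[R]_n) i 0) ^+ 2)%:E))
  (Hq0 : forall k, 0 <= q k)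
  (Hq1 : \sum_(k < K) q k = 1)
  (Hhom : forall k l, Hmat m (P k) (D k) = Hmat m (P l) (D l))
  (wk : 'I_K -> param R m n) :
  forall w : param R m n,
    (objective P D q wk (\sum_(k < K) q k *: wk k)%R <= objective P D q wk w)%E.
Proof.
move=> w.
pose k0 := Ordinal HK.
pose H := Hmat m (P k0) (D k0).
have hK : forall k (a : param R m n),
  (P k).-integrable (D k) (EFin \o (fun x : Rn R n => \sum_r ((Phi (x : 'cV[R]_n) a) r 0) ^+ 2)) /\
  (a^T *m H *m a) 0 0 =
    2 * Rintegral (P k) (D k) (fun x : Rn R n => \sum_r ((Phi (x : 'cV[R]_n) a) r 0) ^+ 2).
  by move=> k a; rewrite /H -(Hhom k k0); apply: keyK => //; exact: Hmom2.
have obj : forall v, objective P D q wk v =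
   (\sum_k q k * (((wk k - v)^T *m H *m (wk k - v)) 0 0 / 2))%:E.
  move=> v; rewrite /objective -sumEFin; apply: eq_bigr => k _.
  rewrite EFinM; congr (_ * _)%E.
  have [hi ee] := hK k (wk k - v).
  have -> : (fun x : Rn R n => (div (Phi (x : 'cV[R]_n) (wk k)) (Phi (x : 'cV[R]_n) v))%:E) =
      EFin \o (fun x : Rn R n => \sum_r ((Phi (x : 'cV[R]_n) (wk k - v)) r 0) ^+ 2).
    apply: funext => x /=; congr EFin; rewrite /div; apply: eq_bigr => r _.
    rewrite PhiB; set A := Phi _ (wk k); set B := Phi _ v; by rewrite !mxE.
  rewrite -(fineK (integrable_fin_num (HD k) hi)); congr EFin.
  by rewrite ee /Rintegral; field.
have Bpos : forall d : param R m n, 0 <= (d^T *m H *m d) 0 0.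
  move=> d; have [_ e2] := hK k0 d; rewrite e2; apply: mulr_ge0 => //.
  by apply: Rintegral_ge0 => x _; apply: sumr_ge0 => r _; exact: sqr_ge0.
rewrite !obj lee_fin.
set wh := \sum_(k < K) q k *: wk k.
set d := wh - w.
have E : forall k, q k * (((wk k - w)^T *m H *m (wk k - w)) 0 0 / 2) =
   q k * (((wk k - wh)^T *m H *m (wk k - wh)) 0 0 / 2) +
   (q k * ((wk k - wh)^T *m H *m d) 0 0 / 2 + q k * (d^T *m H *m (wk k - wh)) 0 0 / 2
    + q k * (d^T *m H *m d) 0 0 / 2).
  move=> k; have -> : wk k - w = (wk k - wh) + d by rewrite /d addrA subrK.
  by rewrite Bexp; field.
rewrite (eq_bigr _ (fun k _ => E k)) big_split /= !big_split /=.
have Z : \sum_(k < K) q k *: (wk k - wh) = 0.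
  rewrite (eq_bigr (fun k => q k *: wk k - q k *: wh)); last by move=> k _; rewrite scalerBr.
  by rewrite sumrB -scaler_suml Hq1 scale1r subrr.
have Z1 : \sum_(i < K) q i * ((wk i - wh)^T *m H *m d) 0 0 / 2 = 0.
  rewrite -mulr_suml (Bsuml _ _ _ H q (fun i => wk i - wh) d) Z trmx0 !mul0mx mxE.
  by rewrite mul0r.
have Z2 : \sum_(i < K) q i * (d^T *m H *m (wk i - wh)) 0 0 / 2 = 0.
  rewrite -mulr_suml (Bsumr _ _ _ H q (fun i => wk i - wh) d) Z !mulmx0 mxE.
  by rewrite mul0r.
have Z3 : \sum_(i < K) q i * (d^T *m H *m d) 0 0 / 2 = (d^T *m H *m d) 0 0 / 2.
  by rewrite -mulr_suml -mulr_suml Hq1 mul1r.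
rewrite Z1 Z2 Z3; have := Bpos d; lra.
Qed.
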